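(* For $1\le i\le s$ let ${\mathcal B}_i$ be a finite $w_{\mathfrak P_i}$-reduced family of nonzero elements of $L$, and let $z_i\in L^*$ be such that for every $b\in{\mathcal B}_i$: (1) $\lfloor w_{\mathfrak P_i}(z_ib)\rfloor\le\lfloor w_{\mathfrak P_j}(z_ib)\rfloor$ for all $j$ with $i<j\le s$; (2) $\lfloor w_{\mathfrak P_i}(z_ib)\rfloor<\lfloor w_{\mathfrak P_l}(z_ib)\rfloor$ for all $l$ with $1\le l<i$. Then the family $\bigcup_{i=1}^s z_i{\mathcal B}_i$ is $w_S$-semi-reduced.
   Context: Let $A$ be a Dedekind domain with fraction field $K$, $\mathfrak p$ a nonzero prime ideal with valuation $v_\mathfrak p$. Let $f\in A[x]$ be monic irreducible separable, $\theta$ a root, $L=K(\theta)$, $\mathcal O$ the integral closure of $A$ in $L$, and $S=\{\mathfrak P_1,\dots,\mathfrak P_s\}$ the set of all primes of $\mathcal O$ over $\mathfrak p$ (in a fixed order), with ramification indices $e_i$ and normalized valuations $v_{\mathfrak P_i}$; $w_{\mathfrak P_i}=v_{\mathfrak P_i}/e_i$, $w_S(z)=\min_iw_{\mathfrak P_i}(z)$. A finite family ${\mathcal B}\subset L$ is $w$-reduced if $w(\sum_b\lambda_bb)=\min_bw(\lambda_bb)$ for all $\lambda_b\in K$, and $w$-semi-reduced if $\lfloor w(\sum_b\lambda_bb)\rfloor=\min_b\lfloor w(\lambda_bb)\rfloor$ for all $\lambda_b\in K$. *)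

(* Defs.v *)
From HB Require Import structures.
From mathcomp Require Import all_boot all_order all_algebra all_field.
Set Implicit Arguments. Unset Strict Implicit. Unset Printing Implicit Defensive.
Import Order.TTheory GRing.Theory Num.Theory.
Local Open Scope ring_scope.

(* A normalized discrete valuation on a field F, given by its values on
   nonzero elements (the value at 0 is irrelevant; 0 is treated as having
   valuation +infinity everywhere below). *)
Definition is_ndval (F : fieldType) (v : F -> int) : Prop :=
  [/\ forall x y, x != 0 -> y != 0 -> v (x * y) = v x + v y,
      forall x y, x != 0 -> y != 0 -> x + y != 0 ->
        Num.min (v x) (v y) <= v (x + y)
    & forall n : int, exists2 x, x != 0 & v x = n].

(* Values in T u {+oo}, with None standing for +oo. *)
Definition emin {d} {T : orderType d} (a b : option T) : option T :=
  match a, b with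
  | None, _ => b
  | _, None => a
  | Some x, Some y => Some (Order.min x y)
  end.

Definition wval (L : fieldType) (v : L -> int) (e : nat) (x : L) : rat :=
  (v x)%:~R / (e%:R).

Definition ewval (L : fieldType) (v : L -> int) (e : nat) (x : L) : option rat :=
  if x == 0 then None else Some (wval v e x).

Definition ewS (L : fieldType) (s : nat) (v : 'I_s -> L -> int) (e : 'I_s -> nat)
  (x : L) : option rat :=
  \big[emin/None]_(i < s) ewval (v i) (e i) x.

Definition efloor (a : option rat) : option int := omap Num.floor a.

Definition reduced (K : fieldType) (L : lmodType K) (T : finType)
  (W : L -> option rat) (B : T -> L) : Prop :=
  forall lam : T -> K,
    W (\sum_(t : T) lam t *: B t) = \big[emin/None]_(t : T) W (lam t *: B t).

Definition semi_reduced (K : fieldType) (L : lmodType K) (T : finType)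
  (W : L -> option rat) (B : T -> L) : Prop :=
  forall lam : T -> K,
    efloor (W (\sum_(t : T) lam t *: B t))
    = \big[emin/None]_(t : T) efloor (W (lam t *: B t)).

(* Main.v *)
Require Import Defs.
From HB Require Import structures.
From mathcomp Require Import all_boot all_order all_algebra all_field.
From mathcomp Require Import zify.
Import Order.TTheory GRing.Theory Num.Theory.
Local Open Scope ring_scope.
Set Implicit Arguments. Unset Strict Implicit.

Section Emin.
Context {d : Order.disp_t} {T : orderType d}.

Definition leo (a b : option T) : bool :=
  match b with None => true | Some y =>
    match a with None => false | Some x => (x <= y)%O end end.

Lemma leo_refl a : leo a a. Proof. by case: a => //= x; exact: le_refl. Qed.
Lemma leo_trans a b c : leo a b -> leo b c -> leo a c.
Proof. by case: c => // z; case: b => // y; case: a => // x /=; exact: le_trans. Qed.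
Lemma leo_anti a b : leo a b -> leo b a -> a = b.
Proof.
case: a => [x|]; case: b => [y|] //= h1 h2; congr Some; apply/eqP.
by rewrite eq_le h1 h2.
Qed.
Lemma leo_eminl a b : leo (emin a b) a.
Proof.
case: a => [x|]; case: b => [y|] //=; rewrite ?le_refl //.
by rewrite minEle; case: ifP => // /negbT; rewrite -ltNge => /ltW.
Qed.
Lemma leo_eminr a b : leo (emin a b) b.
Proof.
case: a => [x|]; case: b => [y|] //=; rewrite ?le_refl //.
by rewrite minEle; case: ifP => // /negbT; rewrite ?le_refl.
Qed.
Lemma leo_emin c a b : leo c a -> leo c b -> leo c (emin a b).
Proof.
case: a => [x|]; case: b => [y|] //=; case: c => // w h1 h2.
by rewrite le_min h1 h2.
Qed.
Lemma emin_cases (a b : option T) : emin a b = a \/ emin a b = b.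
Proof.
case: a => [x|]; case: b => [y|] /=; try by [left|right].
by rewrite minEle; case: ifP; [left|right].
Qed.

Lemma leo_None a : leo a None. Proof. by []. Qed.

Lemma big_emin_lb_seq (I : eqType) (r : seq I) (F : I -> option T) t :
  t \in r -> leo (\big[emin/None]_(i <- r) F i) (F t).
Proof.
elim: r => // a r IH; rewrite inE big_cons => /orP[/eqP->|/IH h].
  exact: leo_eminl.
exact: leo_trans (leo_eminr _ _) h.
Qed.

Lemma big_emin_lb (I : finType) (F : I -> option T) t :
  leo (\big[emin/None]_(i : I) F i) (F t).
Proof. exact: big_emin_lb_seq (mem_index_enum t). Qed.

Lemma big_emin_glb (I : finType) (P : pred I) (F : I -> option T) c :
  (forall t, P t -> leo c (F t)) -> leo c (\big[emin/None]_(i | P i) F i).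
Proof. by move=> h; apply: (big_ind (leo c)) => //; exact: leo_emin. Qed.

Lemma big_emin_att (I : finType) (F : I -> option T) :
  \big[emin/None]_(i : I) F i = None \/
  exists t, F t = \big[emin/None]_(i : I) F i.
Proof.
apply: (big_ind (fun o => o = None \/ exists t, F t = o)); first by left.
  move=> x y hx hy; case: (emin_cases x y) => ->; assumption.
by move=> i _; right; exists i.
Qed.

Lemma big_emin_eq (I : finType) (F : I -> option T) c :
  (forall t, leo c (F t)) -> (c = None \/ exists t, F t = c) ->
  \big[emin/None]_(i : I) F i = c.
Proof.
move=> hl ha; apply: leo_anti; last exact: big_emin_glb.
case: ha => [->|[t <-]] //; exact: big_emin_lb.
Qed.
End Emin.

Lemma omap_emin {d1 d2 : Order.disp_t} {T1 : orderType d1} {T2 : orderType d2}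
  (f : T1 -> T2) : {homo f : x y / (x <= y)%O} ->
  forall a b, omap f (emin a b) = emin (omap f a) (omap f b).
Proof.
move=> hf [x|] [y|] //=; congr Some.
rewrite !minEle; case: ifP => h.
  by rewrite hf.
have h' : (y <= x)%O by rewrite leNgt -leNgt ?h //; case: leP h => // /ltW.
case: ifP => // h2; apply/eqP; rewrite eq_le h2 hf //.
Qed.

Section Val.
Variables (F : fieldType) (v : F -> int) (hv : is_ndval v).

Lemma v1 : v 1 = 0.
Proof.
case: hv => hm _ _; have := hm 1 1 (oner_neq0 _) (oner_neq0 _).
rewrite mulr1; lia.
Qed.

Lemma vN1 : v (-1) = 0.
Proof.
case: hv => hm _ _; have h1 : (-1 : F) != 0 by rewrite oppr_eq0 oner_neq0.
have := hm _ _ h1 h1; rewrite mulrNN mulr1 v1; lia.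
Qed.

Lemma vN x : x != 0 -> v (- x) = v x.
Proof.
case: hv => hm _ _ hx; have h1 : (-1 : F) != 0 by rewrite oppr_eq0 oner_neq0.
by rewrite -mulN1r hm // vN1 add0r.
Qed.

Lemma v_strict x y : x != 0 -> y != 0 -> v x < v y ->
  (x + y != 0) /\ v (x + y) = v x.
Proof.
move=> hx hy hlt; case: (hv) => _ hu _.
have hxy : x + y != 0.
  apply/negP => /eqP h; have : y = - x by rewrite -(addKr x y) h addr0.
  by move=> hyx; move: hlt; rewrite hyx vN // ltxx.
split => //; have h1 := hu _ _ hx hy hxy.
have hny : - y != 0 by rewrite oppr_eq0.
have hx' : (x + y) + - y != 0 by rewrite addrK.
have h2 := hu _ _ hxy hny hx'; rewrite addrK vN // in h2.
move: h1 h2; lia.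
Qed.

Lemma v_ultra x y : x != 0 -> y != 0 -> x + y != 0 ->
  v x <= v (x + y) \/ v y <= v (x + y).
Proof.
case: hv => _ hu _ hx hy hxy; have := hu _ _ hx hy hxy.
lia.
Qed.

Variables (e : nat) (he : (0 < e)%N).

Lemma ewvalE x : x != 0 -> ewval v e x = Some (wval v e x).
Proof. by rewrite /ewval => /negbTE ->. Qed.
Lemma ewval0 : ewval v e 0 = None.
Proof. by rewrite /ewval eqxx. Qed.

Lemma wval_le x y : v x <= v y -> wval v e x <= wval v e y.
Proof.
move=> h; rewrite /wval ler_pM2r ?invr_gt0 ?ltr0n // ler_int //.
Qed.
Lemma wval_lt x y : (wval v e x < wval v e y) = (v x < v y).
Proof. by rewrite /wval ltr_pM2r ?invr_gt0 ?ltr0n // ltr_int. Qed.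

Lemma ew_add_ge (a : option int) y1 y2 :
  leo a (efloor (ewval v e y1)) -> leo a (efloor (ewval v e y2)) ->
  leo a (efloor (ewval v e (y1 + y2))).
Proof.
have [->|h1] := eqVneq y1 0; first by rewrite add0r.
have [->|h2] := eqVneq y2 0; first by rewrite addr0.
have [->|h12] := eqVneq (y1 + y2) 0; first by rewrite ewval0.
rewrite !ewvalE //=; case: a => // m /= hm1 hm2.
case: (v_ultra h1 h2 h12) => h.
  exact: le_trans hm1 (le_floor (wval_le h)).
exact: le_trans hm2 (le_floor (wval_le h)).
Qed.

Lemma ew_sum_ge (a : option int) (I : finType) (P : pred I) (f : I -> F) :
  (forall i, P i -> leo a (efloor (ewval v e (f i)))) ->
  leo a (efloor (ewval v e (\sum_(i | P i) f i))).
Proof.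
move=> h; apply: (big_ind (fun y => leo a (efloor (ewval v e y)))) => //.
  by rewrite ewval0.
exact: ew_add_ge.
Qed.

Lemma ew_dom y r m : efloor (ewval v e y) = Some m ->
  leo (Some (m + 1)) (efloor (ewval v e r)) ->
  efloor (ewval v e (y + r)) = Some m.
Proof.
have [->|hy] := eqVneq y 0; first by rewrite ewval0.
have [->|hr] := eqVneq r 0; first by rewrite addr0.
rewrite (ewvalE hy) (ewvalE hr) /= => -[hm] hle.
have hlt : v y < v r.
  rewrite -wval_lt; apply: (lt_le_trans (floorD1_gt _)).
  rewrite hm; apply: le_trans (floor_le _); by rewrite ler_int.
have [hs hv'] := v_strict hy hr hlt.
by rewrite (ewvalE hs) /= /wval hv' -hm.
Qed.

Lemma ewval_mul z y : z != 0 ->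
  ewval v e (z * y) = omap (fun q => wval v e z + q) (ewval v e y).
Proof.
move=> hz; have [->|hy] := eqVneq y 0; first by rewrite mulr0 ewval0.
rewrite !ewvalE ?mulf_neq0 //=; congr Some.
case: hv => hm _ _; by rewrite /wval hm // intrD mulrDl.
Qed.
End Val.

Lemma floor_scale (K : fieldType) (L : fieldExtType K) (vp : K -> int)
  (v : L -> int) (hv : is_ndval v) (e : nat) (he : (0 < e)%N)
  (hext : forall a : K, a != 0 -> v (a%:A) = e%:Z * vp a)
  (a : K) (y : L) : a != 0 -> y != 0 ->
  Num.floor (wval v e (a *: y)) = vp a + Num.floor (wval v e y).
Proof.
move=> ha hy; have hA : (a%:A : L) != 0 by rewrite scaler_eq0 oner_eq0 orbF.
case: hv => hm _ _.
rewrite -mulr_algl /wval hm // hext // intrD mulrDl.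
have -> : ((e%:Z * vp a)%:~R / e%:R : rat) = (vp a)%:~R.
  rewrite intrM mulrAC -[X in X / _]pmulrn mulrV ?mul1r //.
  by rewrite unitfE pnatr_eq0 -lt0n.
by rewrite floorDzr ?intr_int // intrKfloor.
Qed.
Unset Implicit Arguments. Set Strict Implicit.

Theorem mainTheorem9
  (K : fieldType) (L : fieldExtType K)
  (Lsep : separable (1%VS : {vspace L}) fullv)
  (vp : K -> int) (vp_val : is_ndval vp)
  (s : nat) (vP : 'I_s -> L -> int) (e : 'I_s -> nat)
  (vP_val : forall i, is_ndval (vP i))
  (e_pos : forall i, (0 < e i)%N)
  (vP_ext : forall i (a : K), a != 0 -> vP i (a%:A) = (e i)%:Z * vp a)
  (vP_inj : forall i j, (forall x : L, x != 0 -> vP i x = vP j x) -> i = j)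
  (vP_all : forall u : L -> int, is_ndval u ->
      forall e' : nat, (0 < e')%N ->
      (forall a : K, a != 0 -> u (a%:A) = e'%:Z * vp a) ->
      exists i, forall x : L, x != 0 -> u x = vP i x)
  (I : 'I_s -> finType) (B : forall i, I i -> L)
  (B_nz : forall i (t : I i), B i t != 0)
  (B_red : forall i, reduced (K := K) (ewval (vP i) (e i)) (B i))
  (z : 'I_s -> L) (z_nz : forall i, z i != 0)
  (cond1 : forall i (t : I i) (j : 'I_s), (i < j)%N ->
     Num.floor (wval (vP i) (e i) (z i * B i t))
       <= Num.floor (wval (vP j) (e j) (z i * B i t)))
  (cond2 : forall i (t : I i) (l : 'I_s), (l < i)%N ->
     Num.floor (wval (vP i) (e i) (z i * B i t))
       < Num.floor (wval (vP l) (e l) (z i * B i t))) :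
  semi_reduced (K := K) (ewS vP e)
    (fun p : {i : 'I_s & I i} => z (tag p) * B (tag p) (tagged p)).
Proof.
move=> lam.
pose W j y := efloor (ewval (vP j) (e j) y).
have efS y : efloor (ewS vP e y) = \big[emin/None]_j W j y.
  by rewrite /ewS /efloor (big_morph _ (omap_emin (@le_floor rat)) erefl).
apply: eq_trans (efS _) _.
rewrite (eq_bigr (fun p => \big[emin/None]_j W j (lam p *: (z (tag p) * B (tag p) (tagged p))))); last by move=> p _; exact: efS.
pose term p := lam p *: (z (tag p) * B (tag p) (tagged p)).
pose T p := W (tag p) (term p).
have Wfl j y : y != 0 -> W j y = Some (Num.floor (wval (vP j) (e j) y)).
  by move=> hy; rewrite /W ewvalE.
have W0 j : W j 0 = None by rewrite /W ewval0.
have hT p : \big[emin/None]_j W j (term p) = T p.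
  apply: big_emin_eq; last by right; exists (tag p).
  case: p => i t j; rewrite /T /term /=.
  have [->|hl] := eqVneq (lam (existT _ i t)) 0; first by rewrite scale0r !W0.
  have hzb : z i * B i t != 0 by rewrite mulf_neq0.
  have hne : lam (existT _ i t) *: (z i * B i t) != 0 by rewrite scaler_eq0 negb_or hl.
  rewrite !Wfl //= !(floor_scale (vP_val _) (e_pos _) (vP_ext _)) // lerD2l.
  case: (ltngtP i j) => hij.
  - exact: cond1.
  - exact: ltW (cond2 _ _ _ hij).
  - by have -> : j = i by apply: val_inj.
rewrite (eq_bigr T); last by move=> p _; exact: hT.
have hx : \sum_p lam p *: (z (tag p) * B (tag p) (tagged p)) =
    \sum_i \sum_(t : I i) lam (Tagged I t) *: (z i * B i t).
  by rewrite sig_big_dep; apply: eq_bigr => -[i t].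
apply: big_emin_eq.
  move=> j; apply: ew_sum_ge => // p _.
  apply: leo_trans (big_emin_lb T p) _; rewrite -hT; exact: big_emin_lb.
have [->|[p0 hp0]] := big_emin_att T; first by left.
move: hp0; set c := \big[emin/None]_p T p => hp0.
case Ec : c => [m|]; last by left.
right.
have hlb p : leo (Some m) (T p) by rewrite -Ec; exact: big_emin_lb.
pose P (n : nat) := [exists p : {i : 'I_s & I i}, (val (tag p) == n) && (T p == Some m)].
have exP : exists n, P n.
  by exists (tag p0); apply/existsP; exists p0; rewrite eqxx hp0 Ec eqxx.
case: (ex_minnP exP) => n /existsP [[i0 t1] /andP [/eqP /= hn /eqP hT1]] hmin.
have hmin' p : T p = Some m -> (i0 <= tag p)%N.
  move=> hp; rewrite hn; apply: hmin; apply/existsP; exists p.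
  by rewrite eqxx hp eqxx.
exists i0; rewrite hx (bigD1 i0) //=.
apply: (ew_dom (vP_val i0) (e_pos i0)).
  have -> : \sum_t lam (Tagged I t) *: (z i0 * B i0 t) =
      z i0 * \sum_t lam (Tagged I t) *: B i0 t.
    by rewrite mulr_sumr; apply: eq_bigr => t _; rewrite scalerAr.
  rewrite (ewval_mul (vP_val i0)) // (B_red i0 (fun t => lam (Tagged I t))).
  have hsh : {homo (fun q : rat => wval (vP i0) (e i0) (z i0) + q) :
      x y / (x <= y)%O} by move=> x y; rewrite lerD2l.
  rewrite (big_morph _ (omap_emin hsh) erefl) /efloor.
  rewrite (big_morph _ (omap_emin (@le_floor rat)) erefl).
  have hG t : omap Num.floor (omap (fun q => wval (vP i0) (e i0) (z i0) + q)
      (ewval (vP i0) (e i0) (lam (Tagged I t) *: B i0 t))) = T (Tagged I t).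
    by rewrite /T /W /term /= -(ewval_mul (vP_val i0)) // scalerAr.
  rewrite (eq_bigr _ (fun t _ => hG t)).
  apply: big_emin_eq => [t|]; first exact: hlb.
  by right; exists t1.
apply: (ew_sum_ge (vP_val i0) (e_pos i0)) => i hi; apply: (ew_sum_ge (vP_val i0) (e_pos i0)) => t _.
have [->|hl] := eqVneq (lam (Tagged I t)) 0; first by rewrite scale0r ewval0.
have hzb : z i * B i t != 0 by rewrite mulf_neq0.
have hne : lam (Tagged I t) *: (z i * B i t) != 0 by rewrite scaler_eq0 negb_or hl.
have := hlb (Tagged I t); have := hmin' (Tagged I t).
rewrite /T /W /term /= !ewvalE //= !(floor_scale (vP_val _) (e_pos _) (vP_ext _)) //.
case: (ltngtP i0 i) => hii hm1 hm2.
- have := cond2 i t i0 hii; lia.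
- have := cond1 i t i0 hii.
  have hne' : vp (lam (Tagged I t)) + Num.floor (wval (vP i) (e i) (z i * B i t)) != m.
    by apply/eqP => h; move: (hm1 (congr1 Some h)).
  lia.
- by have /eqP := hi; case; apply: val_inj.
Qed.
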